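(* Let $a,b,c\in\mathbb{Z}$ with $a\equiv2\pmod 4$, $b$ odd, and $ab(a+b)c$ a perfect square. Then the equation $ax^2+by^2=cz^2$ is not partition regular with respect to $x,y$.
   Context: The equation $ax^2+by^2=cz^2$ is partition regular with respect to $x,y$ if for every finite coloring of $\mathbb{N}=\{1,2,\dots\}$ there exist distinct $x,y\in\mathbb{N}$ of the same color and $z\in\mathbb{N}$ with $ax^2+by^2=cz^2$. A perfect square is $k^2$, $k\in\mathbb{Z}$. *)

(* Defs.v *)
From mathcomp Require Import all_boot all_order all_algebra.
Set Implicit Arguments. Unset Strict Implicit. Unset Printing Implicit Defensive.
Import Order.TTheory GRing.Theory Num.Theory.
Local Open Scope ring_scope.

(* A finite colouring of N = {1,2,...} with k colours is a map col : nat -> 'I_k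
   (its value at 0 is irrelevant). *)
Definition partition_regular_xy (a b c : int) : Prop :=
  forall (k : nat) (col : nat -> 'I_k),
    exists x y z : nat,
      [&& (0 < x)%N, (0 < y)%N, (0 < z)%N & x != y] /\ col x = col y /\
      a * (x%:Z) ^+ 2 + b * (y%:Z) ^+ 2 = c * (z%:Z) ^+ 2.

Definition perfect_square (n : int) : Prop := exists k : int, n = k ^+ 2.

(* Main.v *)
Require Import Defs.
From mathcomp Require Import all_boot all_order all_algebra.
From mathcomp Require Import zify ring lra.
Import Order.TTheory GRing.Theory Num.Theory.
Local Open Scope ring_scope.
Definition oddz (m : int) := ~~ (2 %| m)%Z.

Lemma oddzP m : oddz m <-> exists s, m = 2*s+1.
Proof. rewrite /oddz; split=> [h|[s ->]]; last by lia. exists (m %/ 2)%Z; lia. Qed.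

Lemma oddzM m n : oddz m -> oddz n -> oddz (m*n).
Proof.
move=> /oddzP[s ->] /oddzP[t ->]; apply/oddzP; exists (2*s*t+s+t); ring.
Qed.

Lemma oddzD2 m t : oddz m -> oddz (m + 2*t).
Proof. rewrite /oddz; lia. Qed.

Lemma oddz_neq0 m : oddz m -> m != 0.
Proof. rewrite /oddz; lia. Qed.

Arguments oddzM {m n}. Arguments oddzD2 {m} t. Arguments oddz_neq0 {m}.
Lemma dec2 (n : int) : n != 0 -> exists i m, n = 2^+i * m /\ oddz m.
Proof.
have [N] := ubnP `|n|%N; elim: N n => [|N IH] n hN hn0; first by lia.
case h2: (2 %| n)%Z.
  have e : n = 2 * (n %/ 2)%Z by lia.
  have [i [m [hm1 hm]]] : exists i m, (n %/ 2)%Z = 2^+i * m /\ oddz m.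
    apply: IH; lia.
  exists i.+1, m; split=> //; by rewrite e hm1 exprS mulrA.
by exists 0%N, n; rewrite expr0 mul1r /oddz h2.
Qed.

Lemma uniq2 i j m m' : oddz m -> oddz m' -> 2^+i * m = 2^+j * m' -> i = j /\ m = m'.
Proof.
wlog hij : i j m m' / (i <= j)%N.
  move=> W hm hm' e; case: (leqP i j) => h; first exact: W.
  by have [-> ->] := W j i m' m (ltnW h) hm' hm (esym e).
move=> hm hm'; rewrite -(subnKC hij) exprD -mulrA => /mulfI.
move=> /(_ (expf_neq0 _ (isT : (2:int) != 0))) e.
case: (j - i)%N e => [|d] e.
  by rewrite addn0; split => //; rewrite e expr0 mul1r.
move: hm; rewrite e exprS -mulrA /oddz; lia.
Qed.

Lemma natdec (x : nat) : (0 < x)%N -> exists X, x%:Z = 2^+(logn 2 x) * X /\ oddz X.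
Proof.
move=> hx; have [m hm e] := pfactor_coprime (isT : prime 2) hx.
exists m%:Z; split.
  rewrite {1}e PoszM mulrC; congr (_ * _).
  by elim: (logn 2 x) => // k IH; rewrite expnS PoszM IH exprS.
by move: hm; rewrite coprime2n /oddz /dvdz unfold_in /= dvdn2 negbK.
Qed.
Arguments uniq2 {i j m m'}. Arguments natdec {x}. Arguments dec2 {n}.

Lemma sq8 (s : 'Z_8) : (2*s+1)^+2 = 1.
Proof. apply/eqP; case: s => [[|[|[|[|[|[|[|[|]]]]]]]] ?] //. Qed.

Lemma fin8 (sA sB : 'Z_8) : let A := 2*sA+1 in let B := 2*sB+1 in A*B*(2*A+B)*A != 1.
Proof.
case: sA => [[|[|[|[|[|[|[|[|]]]]]]]] ?] //; case: sB => [[|[|[|[|[|[|[|[|]]]]]]]] ?] //.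
Qed.

Lemma cast_odd m : oddz m -> exists s : 'Z_8, (m%:~R : 'Z_8) = 2*s+1.
Proof. move=> /oddzP[t ->]; exists (t%:~R); by rewrite intrD intrM. Qed.

Lemma cinfo (A B c k : int) : oddz A -> oddz B -> c != 0 ->
  2*A*B*(2*A+B)*c = k^+2 -> exists e C K, c = 2^+e*C /\ oddz C /\
  (exists g, e.+1 = 2*g)%N /\ oddz K /\ A*B*(2*A+B)*C = K^+2.
Proof.
move=> oA oB c0 hk; have [e [C [ec oC]]] := dec2 c0.
have oP : oddz (A*B*(2*A+B)*C).
  apply: oddzM => //; apply: oddzM; first exact: oddzM.
  by rewrite addrC; apply: oddzD2.
have e1 : 2*A*B*(2*A+B)*c = 2^+e.+1 * (A*B*(2*A+B)*C) by rewrite ec exprS; ring.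
have k0 : k != 0.
  apply/eqP=> k0; move: hk; rewrite e1 k0 expr0n /= => /eqP.
  by rewrite mulf_eq0 expf_eq0 (negbTE (oddz_neq0 oP)) orbF andbF.
have [g [K [ek oK]]] := dec2 k0.
have e2 : k^+2 = 2^+(g*2) * K^+2 by rewrite ek exprMn exprM.
have [h1 h2] := uniq2 oP (oddzM oK oK) (etrans (esym e1) (etrans hk e2)).
exists e, C, K; split=> //; split=> //; split; first by exists g; rewrite h1 mulnC.
by split.
Qed.
Arguments cinfo {A B c k}.
Arguments cast_odd {m}.
Lemma sq8m (s : 'Z_8) : (2*s+1)*(2*s+1) = 1.
Proof. exact: sq8. Qed.
Lemma two8 : ((2:int)%:~R : 'Z_8) = 2. Proof. by []. Qed.
Lemma z8 n (q : 'Z_8) : 2*(2^+(n+2)*q) = 0.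
Proof.
rewrite exprD. have -> : 2*(2^+n*2^+2*q) = 2^+n*q*(2*2^+2) by ring.
have -> : (2*2^+2 : 'Z_8) = 0 by apply/eqP.
by rewrite mulr0.
Qed.
Lemma z8' n (t q : 'Z_8) : t = 2 -> 2*(t^+(n+2)*q) = 0.
Proof. by move=> ->; apply: z8. Qed.

Lemma key (A B c k : int) (x y z : nat) : oddz A -> oddz B ->
  2*A*B*(2*A+B)*c = k^+2 -> (0<x)%N -> (0<y)%N -> (0<z)%N ->
  odd (logn 2 x) = odd (logn 2 y) ->
  2*A*x%:Z^+2 + B*y%:Z^+2 = c*z%:Z^+2 -> False.
Proof.
move=> oA oB hk hx hy hz hpar.
have [X [ex oX]] := natdec hx; have [Y [ey oY]] := natdec hy.
have [Z [ez oZ]] := natdec hz.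
rewrite ex ey ez; move: hpar.
move: (logn 2 x) (logn 2 y) (logn 2 z) => i j f hpar E.
have ci : forall v W, oddz W -> 2^+v*W = c*(2^+f*Z)^+2 ->
    exists e C K, (exists g, e.+1 = 2*g)%N /\ oddz C /\ oddz K /\
    A*B*(2*A+B)*C = K^+2 /\ (v = e + f*2)%N /\ W = C*Z^+2.
  move=> v W oW e1.
  have c0 : c != 0.
    apply/eqP=> c0; move: e1; rewrite c0 mul0r => /eqP.
    by rewrite mulf_eq0 expf_eq0 (negbTE (oddz_neq0 oW)) orbF andbF.
  have [e [C [K [ec [oC [hg [oK hK]]]]]]] := cinfo oA oB c0 hk.
  have e2 : c*(2^+f*Z)^+2 = 2^+(e + f*2) * (C*Z^+2).
    by rewrite ec exprMn -exprM exprD; ring.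
  have [h1 h2] := uniq2 oW (oddzM oC (oddzM oZ oZ)) (etrans e1 e2).
  by exists e, C, K.
case: (leqP j i) => hij.
  have [d ed] : exists d, i = (j + d)%N by exists (i - j)%N; lia.
  rewrite {}ed {i hij hpar} in E *.
  pose W := B*Y^+2 + 2*(2^+(d*2)*(A*X^+2)).
  have oW : oddz W := oddzD2 _ (oddzM oB (oddzM oY oY)).
  have e1 : 2^+(j*2) * W = c*(2^+f*Z)^+2.
    rewrite -E /W !exprMn -!exprM mulnDl exprD; ring.
  have [e [C [K [[g hg] [_ [_ [_ [hv _]]]]]]]] := ci _ _ oW e1.
  move: hv hg; clear; lia.
have hij2 : (i.+2 <= j)%N.
  have : j != i.+1 by apply/eqP=> ej; move: hpar; rewrite ej /=; case: (odd i).
  move: hij; clear; lia.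
have [d ed] : exists d, j = (i + (d + 2))%N by exists (j - i.+2)%N; lia.
rewrite {}ed {j hij hpar hij2} in E *.
pose W := A*X^+2 + 2*(2^+(d*2+2)*(B*Y^+2)).
have oW : oddz W := oddzD2 _ (oddzM oA (oddzM oX oX)).
have e1 : 2^+(i*2+1) * W = c*(2^+f*Z)^+2.
  rewrite -E /W !exprMn -!exprM !mulnDl !exprD; ring.
have [e [C [K [_ [oC [oK [hK [_ hW]]]]]]]] := ci _ _ oW e1.
have [sA hA] := cast_odd oA; have [sB hB] := cast_odd oB.
have [sC hC] := cast_odd oC; have [sK hK'] := cast_odd oK.
have [sX hX] := cast_odd oX; have [sY hY] := cast_odd oY; have [sZ hZ] := cast_odd oZ.
have := congr1 (fun t : int => (t%:~R : 'Z_8)) hW.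
have := congr1 (fun t : int => (t%:~R : 'Z_8)) hK.
rewrite /W /= !(mulrz_nat, intrM, intrD, rmorphXn) ?mulrz_nat hA hB hC hK' hX hY hZ !sq8m z8' // !mulr1 addr0 => h1 h2.
by move: (fin8 sA sB); rewrite -h2 in h1; rewrite /= h1.
Qed.

Arguments key {A B c k x y z}.

Theorem propositionP (a b c : int) :
  (a = 2 %[mod 4])%Z -> ~~ (2 %| b)%Z ->
  perfect_square (a * b * (a + b) * c) ->
  ~ partition_regular_xy a b c.
Proof.
move=> ha hb [k hk] PR.
have [s ea] : exists s, a = 2*(2*s+1) by exists (a %/ 4)%Z; lia.
have oA : oddz (2*s+1) by apply/oddzP; exists s.
have [x [y [z [/and4P[hx hy hz _] [hc E]]]]] :=
  PR 2%N (fun n => inord (odd (logn 2 n))).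
have hpar : odd (logn 2 x) = odd (logn 2 y).
  move/(congr1 (@nat_of_ord 2)): hc; rewrite !inordK; last 2 first.
  - by case: (odd _).
  - by case: (odd _).
  by case: (odd _); case: (odd _).
rewrite ea in hk E.
exact: (key oA hb hk hx hy hz hpar E).
Qed.
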